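(* (i) For $x\notin\bigcup_{q\ge1}\mathrm{Fix}_q(\sigma)^\circ$, $\omega_x$ is a hermitian character of $C(X)'_{00}$ which is continuous in the topology induced by the norm of $\ell^1(\Sigma)$. (ii) Let $x\in\bigcup_{q\ge1}\mathrm{Fix}_q(\sigma)^\circ$ and $c\in\mathbb{C}\setminus\{0\}$. Then the following are equivalent: (a) $\omega_{x,c}$ is continuous on $C(X)'_{00}$ in the topology induced by $\ell^1(\Sigma)$; (b) $\omega_{x,c}$ is a hermitian character of $C(X)'_{00}$; (c) $c\in\mathbb{T}$.
   Context: Let $X$ be a non-empty compact Hausdorff space and $\sigma:X\to X$ a homeomorphism; $\mathrm{Fix}_k(\sigma)=\{x:\sigma^kx=x\}$, superscript $\circ$ denotes interior, $\mathrm{supp}(f)$ the closure of $\{f\ne0\}$. $C(X)$ is the algebra of continuous complex functions with sup norm, $\alpha(f)=f\circ\sigma^{-1}$. $\ell^1(\Sigma)$ is the set of $\ell:\mathbb{Z}\to C(X)$ with $\|\ell\|=\sum_k\|\ell(k)\|_\infty<\infty$, product $(\ell\ell')(n)=\sum_k\ell(k)\alpha^k(\ell'(n-k))$, involution $\ell^*(n)=\overline{\alpha^n(\ell(-n))}$; elements are written $\sum_kf_k\delta^k$ with $f_k=\ell(k)$, and $C(X)$ is embedded as $\{f\delta^0\}$. $c_{00}(\Sigma)$ is the $*$-subalgebra of finite sums and $C(X)'_{00}$ is the commutant of $C(X)$ in it, equal to $\{\sum_kf_k\delta^k\in c_{00}(\Sigma):\mathrm{supp}(f_k)\subset\mathrm{Fix}_k(\sigma)\}$.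 For $x\notin\bigcup_{q\ge1}\mathrm{Fix}_q(\sigma)^\circ$, $\omega_x(\sum_kf_k\delta^k)=f_0(x)$; for $x\in\bigcup_{q\ge1}\mathrm{Fix}_q(\sigma)^\circ$ and $c\ne0$, $\omega_{x,c}(\sum_kf_k\delta^k)=\sum_jf_{jn}(x)c^j$, with $n$ the minimal $n\ge1$ such that $x\in\mathrm{Fix}_n(\sigma)^\circ$; these are characters of $C(X)'_{00}$. A character $\omega$ is hermitian if $\omega(a^* )=\overline{\omega(a)}$ for all $a$. *)

(* Defs.v *)
(* Complex numbers: R[i] (real_closed
   complex.v) over an abstract R : realType, seen as a numClosedFieldType so
   that MathComp-Analysis endows it with its norm topology. *)
From HB Require Import structures.
From mathcomp Require Import all_boot all_order all_algebra.
From mathcomp Require Import all_classical all_reals all_analysis.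
From mathcomp Require Import complex.
Import Order.TTheory GRing.Theory Num.Theory.
Import numFieldNormedType.Exports.

Set Implicit Arguments.
Unset Strict Implicit.
Unset Printing Implicit Defensive.

Local Open Scope ring_scope.
Local Open Scope classical_set_scope.

Definition CC (R : realType) : numClosedFieldType := R[i].

Definition cabs (R : realType) (z : CC R) : R := complex.Re `|z|.

Section CrossedProduct.
Variables (R : realType) (X : topologicalType) (sigma sigmai : X -> X).
(* sigmai is the inverse of the homeomorphism sigma *)

Definition iterz (k : int) : X -> X :=
  match k with
  | Posz n => iter n sigma
  | Negz n => iter n.+1 sigmai
  end.

Definition Fix (q : nat) : set X := [set x | iter q sigma x = x].

Definition supnorm (f : X -> CC R) : R := sup [set cabs (f x) | x in [set: X]].

(* elements  sum_k f_k delta^k  are represented by  k |-> f_k *)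
Definition elt := int -> X -> CC R.

Definition c00 (a : elt) : Prop :=
  (forall k, continuous (a k)) /\ finite_set [set k | exists x, a k x != 0].

Definition l1norm (a : elt) : R := \sum_(k \in [set: int]) supnorm (a k).

Definition eadd (a b : elt) : elt := fun k x => a k x + b k x.
Definition escale (l : CC R) (a : elt) : elt := fun k x => l * a k x.
Definition esub (a b : elt) : elt := fun k x => a k x - b k x.

(* alpha^k(g) = g o sigma^{-k};
   (a b)(n) = sum_k a(k) alpha^k(b(n-k)) *)
Definition emul (a b : elt) : elt :=
  fun n x => \sum_(k \in [set: int]) (a k x * b (n - k) (iterz (- k) x)).

Definition estar (a : elt) : elt :=
  fun n x => (a (- n) (iterz (- n) x))^*.

Definition emb (f : X -> CC R) : elt :=
  fun k => if k == 0 then f else fun=> 0.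

Definition commutant00 (a : elt) : Prop :=
  c00 a /\ forall f : X -> CC R, continuous f -> emul (emb f) a = emul a (emb f).

Definition is_character (A : elt -> Prop) (w : elt -> CC R) : Prop :=
  [/\ forall a b, A a -> A b -> w (eadd a b) = w a + w b,
      forall l a, A a -> w (escale l a) = l * w a,
      forall a b, A a -> A b -> w (emul a b) = w a * w b
    & exists2 a, A a & w a != 0].

Definition is_hermitian_character (A : elt -> Prop) (w : elt -> CC R) : Prop :=
  is_character A w /\ forall a, A a -> w (estar a) = (w a)^*.

Definition l1_continuous_on (A : elt -> Prop) (w : elt -> CC R) : Prop :=
  forall a, A a -> forall e : R, 0 < e ->
    exists2 d : R, 0 < d &
      forall b, A b -> l1norm (esub b a) < d -> cabs (w b - w a) < e.

Definition omega_x (x : X) (w : elt) : CC R := w 0 x.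

Definition omega_xc (x : X) (n : nat) (c : CC R) (a : elt) : CC R :=
  \sum_(j \in [set: int]) (a (j * n%:Z) x * c ^ j).

End CrossedProduct.

(* Main.v *)
Require Import Defs.
From HB Require Import structures.
From mathcomp Require Import all_boot all_order all_algebra.
From mathcomp Require Import all_classical all_reals all_analysis.
From mathcomp Require Import complex.
From mathcomp Require Import finmap.
From mathcomp Require Import lra.
Import Order.TTheory GRing.Theory Num.Theory.
Import numFieldNormedType.Exports.
Local Open Scope ring_scope.
Local Open Scope classical_set_scope.
Set Implicit Arguments.
Unset Strict Implicit.
Unset Printing Implicit Defensive.
Section T.
Variable R : realType.
Implicit Types z w : CC R.
Lemma normr_cabs z : `|z| = (cabs z)%:C%C.
Proof.
have h := normr_ge0 z; have := ger0_Im h; rewrite /cabs.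
by case: (`|z|) => a b /= ->.
Qed.
Lemma cabs_ge0 z : 0 <= cabs z.
Proof. by have := normr_ge0 z; rewrite normr_cabs lecR. Qed.
Lemma cabsD z w : cabs (z + w) <= cabs z + cabs w.
Proof. by have := ler_normD z w; rewrite !normr_cabs -rmorphD lecR. Qed.
Lemma cabsM z w : cabs (z * w) = cabs z * cabs w.
Proof. by apply: complexI; rewrite rmorphM -!normr_cabs normrM. Qed.
Lemma cabsN z : cabs (- z) = cabs z.
Proof. by rewrite /cabs normrN. Qed.
Lemma cabs_eq0 z : (cabs z == 0) = (z == 0).
Proof. by rewrite -[z == 0]normr_eq0 normr_cabs -(rmorph0 (real_complex R)) (inj_eq (@complexI R)). Qed.
Lemma cabs_real (r : R) : 0 <= r -> cabs (r%:C%C) = r.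
Proof. by move=> r0; rewrite /cabs ger0_norm ?ler0c. Qed.
Lemma cabs1 : cabs (1 : CC R) = 1.
Proof. by rewrite /cabs normr1. Qed.
Lemma cabs0 : cabs (0 : CC R) = 0.
Proof. by rewrite /cabs normr0. Qed.
Lemma cabs_conj z : cabs (z^*) = cabs z.
Proof. by rewrite /cabs norm_conjC. Qed.
Lemma cabs_rcB (t r : R) : cabs ((t%:C)%C - (r%:C)%C : CC R) = `|t - r|.
Proof.
rewrite /cabs -rmorphB.
case: (ltrP (t - r) 0) => h.
  by rewrite -normrN -rmorphN ger0_norm ?ler0c ?ltr0_norm // oppr_ge0 ltW.
by rewrite !ger0_norm ?ler0c.
Qed.
Lemma rc_cont : continuous (fun r : R => (r%:C%C : CC R)).
Proof.
move=> t; apply/cvgrPdist_lt => e e0.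
have := e0; rewrite ltcE /= => /andP[/eqP Ie Re0].
near=> r.
rewrite normr_cabs ltcE /= Ie eqxx /= cabs_rcB.
rewrite /=. near: r.
have := (@cvg_id _ (nbhs t)). move/cvgrPdist_lt => /(_ _ Re0). done.
Unshelve. all: end_near.
Qed.
Lemma urysohnR (X : topologicalType) : hausdorff_space X -> compact [set: X] ->
  forall A B : set X, closed A -> closed B -> A `&` B = set0 ->
  exists g : X -> R, [/\ continuous g, forall x, 0 <= g x <= 1,
     forall x, A x -> g x = 0 & forall x, B x -> g x = 1].
Proof.
move=> hX cX A B cA cB AB.
have nX := compact_normal hX cX.
have := (@normal_separatorP R X).1 nX A B cA cB AB.
move=> /(@uniform_separatorP X R) [g [cg g01 gA gB]].
exists g; split => //.
- move=> x; have : `[0, 1]%classic (g x) by apply: g01; exists x.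
  by rewrite /= in_itv.
- by move=> x Ax; apply: gA; exists x.
- by move=> x Bx; apply: gB; exists x.
Qed.
Lemma cabs_cont : continuous (@cabs R).
Proof.
move=> z; apply/(@cvgrPdist_lt _ _ _ (nbhs z) (nbhs_filter z)) => e e0.
have e0' : (0 : CC R) < e%:C%C by rewrite ltcR.
exists e%:C%C => // w /=; rewrite /ball_ /= normr_cabs ltcR => h.
apply: le_lt_trans h.
rewrite ler_norml; apply/andP; split.
- rewrite lerBrDl lerBlDr; have -> : cabs w = cabs (z + (w - z)) by rewrite addrC subrK.
  by apply: le_trans (cabsD _ _) _; rewrite -opprB cabsN.
- by rewrite lerBlDr; apply: le_trans (cabsD (z - w) w); rewrite subrK.
Qed.
Lemma cabs_comp_cont (X : topologicalType) (f : X -> CC R) :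
  continuous f -> continuous (fun x => cabs (f x)).
Proof. by move=> cf x; apply: continuous_comp; [apply: cf | apply: cabs_cont]. Qed.
Lemma contB (X : topologicalType) (f g : X -> CC R) :
  continuous f -> continuous g -> continuous (fun x => f x - g x).
Proof. by move=> cf cg x; apply: cvgB; [apply: cf|apply: cg]. Qed.
Lemma cont_bounded (X : topologicalType) (f : X -> CC R) :
  compact [set: X] -> continuous f -> exists M, forall x, cabs (f x) <= M.
Proof.
move=> cX cf.
have cc : compact [set cabs (f x) | x in [set: X]].
  apply: continuous_compact => //; apply: continuous_subspaceT.
  exact: cabs_comp_cont.
have := compact_bounded cc; case=> M [_ HM].
exists (`|M| + 1) => x; have := HM (`|M| + 1).
have h : M < `|M| + 1 by apply: (le_lt_trans (ler_norm M)); rewrite ltrDl.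
move=> /(_ h) /(_ (cabs (f x))) => H.
by apply: le_trans (H _) ; [apply: ler_norm | exists x].
Qed.
Lemma bern (s : R) k : 1 <= s -> 1 + k%:R * (s - 1) <= s ^+ k.
Proof.
move=> s1; elim: k => [|k IH]; first by rewrite mul0r addr0 expr0.
rewrite exprS -addn1 natrD.
have K0 : 0 <= (k%:R : R) by [].
have := mulr_ge0 K0 (sqr_ge0 (s - 1)).
set t := s ^+ k in IH *; set K := (k%:R : R) in IH K0 *.
have h2 : 0 <= s * (t - (1 + K * (s - 1))).
  by apply: mulr_ge0; [lra | lra].
nra.
Qed.
Lemma pow_unb (s M : R) : 1 < s -> exists k : nat, M < s ^+ k.
Proof.
move=> s1; set k := (Num.trunc (`|M| / (s - 1))).+1.
exists k; have hb := bern k (ltW s1); apply: (lt_le_trans _ hb).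
have := truncnS_gt (`|M| / (s - 1)); rewrite -/k => hk.
have s10 : 0 < s - 1 by lra.
have : `|M| < k%:R * (s - 1) by rewrite -ltr_pdivrMr.
have := ler_norm M; lra.
Qed.
End T.

Section Main.
Variables (R : realType) (X : topologicalType) (sigma sigmai : X -> X).
Hypotheses (hX : hausdorff_space X) (cX : compact [set: X]) (nX : [set: X] !=set0)
  (sK : cancel sigma sigmai) (siK : cancel sigmai sigma).
Local Notation C := (CC R).
Local Notation elt := (elt R X).
Local Notation comm := (@commutant00 R X sigma sigmai).

Lemma supnorm_ub (f : X -> C) : continuous f -> forall x, cabs (f x) <= supnorm f.
Proof.
move=> cf x; have [M HM] := cont_bounded cX cf.
apply: ub_le_sup; last by exists x.
by exists M => _ [y _ <-].
Qed.

Lemma supnorm_le (f : X -> C) M : (forall x, cabs (f x) <= M) -> supnorm f <= M.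
Proof.
move=> HM; have [x0 _] := nX.
by apply: ge_sup; [exists (cabs (f x0)), x0 | move=> _ [y _ <-]].
Qed.

Lemma supnorm_ge0 (f : X -> C) : 0 <= supnorm f.
Proof.
have [x0 _] := nX.
have [hu|nhu] := pselect (has_ubound [set cabs (f x) | x in [set: X]]).
  apply: le_trans (cabs_ge0 (f x0)) _.
  by apply: ub_le_sup => //; exists x0.
rewrite /supnorm sup_out // => -[_ hu]; exact: nhu.
Qed.

Lemma supnorm0 (f : X -> C) : (forall x, f x = 0) -> supnorm f = 0.
Proof.
move=> f0; apply/eqP; rewrite eq_le supnorm_ge0 andbT.
by apply: supnorm_le => x; rewrite f0 cabs0.
Qed.

Lemma iter_sK k z : iter k sigma (iter k sigmai z) = z.
Proof. elim: k z => // k IH z; by rewrite iterSr /= siK IH. Qed.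
Lemma iter_siK k z : iter k sigmai (iter k sigma z) = z.
Proof. elim: k z => // k IH z; by rewrite iterSr /= sK IH. Qed.
Lemma fix_inv k z : iter k sigmai z = z <-> iter k sigma z = z.
Proof.
split => h.
  by rewrite -{1}h iter_sK.
by rewrite -{1}h iter_siK.
Qed.

Lemma iterzN_fix (m : int) z : iterz sigma sigmai (- m) z = z <-> iter `|m|%N sigma z = z.
Proof.
case: m => [[|p]|p].
- by [].
- exact: (fix_inv p.+1).
- by [].
Qed.

Lemma iter_mul_fix k j z : iter k sigma z = z -> iter (j * k) sigma z = z.
Proof.
move=> h; rewrite iterM; elim: j => //= j IH.
by rewrite IH.
Qed.

Lemma fix_gcd a b z : (0 < a)%N -> iter a sigma z = z -> iter b sigma z = z ->
  iter (gcdn a b) sigma z = z.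
Proof.
move=> a0 ha hb; have [u _ /dvdnP [t ht]] := Bezoutl b a0.
have : iter (gcdn a b + u * b) sigma z = z by rewrite ht iter_mul_fix.
by rewrite iterD iter_mul_fix.
Qed.

Lemma iterz_mul_fix n (j : int) z : iter n sigma z = z ->
  iterz sigma sigmai (- (j * n%:Z)) z = z.
Proof.
by move=> h; apply/iterzN_fix; rewrite abszM /=; apply: iter_mul_fix.
Qed.


Definition supp (a : elt) : {fset int} := fset_set [set k | exists x, a k x != 0].

Lemma supp_out (a : elt) : c00 a -> forall k, k \notin supp a -> forall x, a k x = 0.
Proof.
move=> [_ fa] k; rewrite /supp in_fset_set // notin_setE /= => kS x.
by apply/eqP; apply/negPn/negP => h; apply: kS; exists x.
Qed.

Lemma emul_embl (f : X -> C) (a : elt) m y :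
  emul sigma sigmai (emb f) a m y = f y * a m y.
Proof.
rewrite /emul (fsbigTE [fset 0%Z]%fset) ?big_seq_fset1.
  by rewrite /emb eqxx subr0 oppr0.
by move=> k; rewrite inE => /negbTE k0; rewrite /emb k0 mul0r.
Qed.

Lemma emul_embr (a : elt) (f : X -> C) m y :
  emul sigma sigmai a (emb f) m y = a m y * f (iterz sigma sigmai (- m) y).
Proof.
rewrite /emul (fsbigTE [fset m]%fset) ?big_seq_fset1.
  by rewrite /emb subrr eqxx.
move=> k; rewrite inE => km; rewrite /emb.
by rewrite subr_eq0 eq_sym (negbTE km) mulr0.
Qed.

Lemma comm_eq (a : elt) : comm a -> forall f : X -> C, continuous f ->
  forall m y, f y * a m y = a m y * f (iterz sigma sigmai (- m) y).
Proof.
move=> [_ h] f cf m y; have := congr1 (fun b => b m y) (h f cf).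
by rewrite /= emul_embl emul_embr.
Qed.

Lemma comm_intro (a : elt) : c00 a ->
  (forall m y, a m y != 0 -> iterz sigma sigmai (- m) y = y) -> comm a.
Proof.
move=> ca h; split => // f cf; apply/funext => m; apply/funext => y.
rewrite emul_embl emul_embr.
have [->|/h ->] := eqVneq (a m y) 0; first by rewrite mulr0 mul0r.
by rewrite mulrC.
Qed.

Lemma urysohnC (A B : set X) : closed A -> closed B -> A `&` B = set0 ->
  exists f : X -> C, [/\ continuous f, forall x, cabs (f x) <= 1,
     forall x, A x -> f x = 0 & forall x, B x -> f x = 1].
Proof.
move=> cA cB AB; have [g [cg g01 gA gB]] := urysohnR R hX cX cA cB AB.
exists (fun x => (g x)%:C%C); split.
- by move=> x; apply: continuous_comp; [apply: cg | apply: rc_cont].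
- by move=> x; have /andP[g0 g1] := g01 x; rewrite cabs_real.
- by move=> x Ax; rewrite gA.
- by move=> x Bx; rewrite gB.
Qed.

Lemma cl1 (t : X) : closed [set t].
Proof. exact: (accessible_closed_set1 (hausdorff_accessible hX)). Qed.

Lemma comm_fix (a : elt) m y : comm a -> a m y != 0 ->
  iterz sigma sigmai (- m) y = y.
Proof.
move=> ca amy; apply/eqP; apply: contraNT amy => neq.
set z := iterz sigma sigmai (- m) y in neq *.
have dis : [set y] `&` [set z] = set0.
  apply/seteqP; split => t //= [-> e]; by rewrite e eqxx in neq.
have [f [cf _ f0 f1]] := urysohnC (@cl1 y) (@cl1 z) dis.
have := comm_eq ca cf m y; rewrite f0 // f1 // mul0r mulr1 => <-.
by [].
Qed.

Lemma comm_int (a : elt) m y : comm a -> a m y != 0 ->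
  interior (Fix sigma `|m|%N) y.
Proof.
move=> ca amy.
have oU : open [set t | 0 < cabs (a m t)].
  apply: (@open_comp _ _ (fun t => cabs (a m t)) [set r : R | 0 < r]).
    by move=> t _; have := cabs_comp_cont (ca.1.1 m); apply.
  exact: (@open_gt R 0).
rewrite /interior /=.
apply: (@filterS _ _ _ [set t | 0 < cabs (a m t)]).
  move=> t /= h; apply/iterzN_fix; apply: (comm_fix ca).
  by rewrite -cabs_eq0 gt_eqF.
apply: open_nbhs_nbhs; split => //=.
by rewrite lt0r cabs_eq0 amy cabs_ge0.
Qed.


Lemma sum_sub_le (s t : {fset int}) (F : int -> R) : (forall i, 0 <= F i) ->
  (s `<=` t)%fset -> \sum_(i <- s) F i <= \sum_(i <- t) F i.
Proof.
move=> F0 st; rewrite [X in _ <= X](big_fsetID _ (mem s)) /=.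
have -> : [fset x in t | x \in s]%fset = s.
  apply/fsetP => i; rewrite !inE; case: (boolP (i \in s)) => h; last by rewrite andbF.
  by rewrite andbT (fsubsetP st).
by rewrite lerDl sumr_ge0.
Qed.

Lemma l1norm_W (d : elt) (W : {fset int}) :
  (forall k, k \notin W -> forall x, d k x = 0) ->
  l1norm d = \sum_(k <- W) supnorm (d k).
Proof. by move=> dW; rewrite /l1norm (fsbigTE W) // => k /dW h; apply: supnorm0. Qed.

Lemma le_l1 (d : elt) (W A : {fset int}) :
  (forall k, k \notin W -> forall x, d k x = 0) ->
  \sum_(k <- A) supnorm (d k) <= l1norm d.
Proof.
move=> dW; rewrite (@l1norm_W d (A `|` W)%fset).
  by apply: sum_sub_le; [move=> i; apply: supnorm_ge0 | apply: fsubsetUl].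
by move=> k; rewrite in_fsetU negb_or => /andP[_ /dW].
Qed.

Lemma cabs_sum (s : seq int) (F : int -> C) :
  cabs (\sum_(i <- s) F i) <= \sum_(i <- s) cabs (F i).
Proof.
elim: s => [|i s IH]; first by rewrite !big_nil cabs0.
by rewrite !big_cons; apply: le_trans (cabsD _ _) _; rewrite lerD2l.
Qed.

Lemma esub_out (a b : elt) : c00 a -> c00 b ->
  forall k, k \notin (supp a `|` supp b)%fset -> forall x, esub b a k x = 0.
Proof.
move=> ca cb k; rewrite in_fsetU negb_or => /andP[ka kb] x.
by rewrite /esub (supp_out ca ka) (supp_out cb kb) subr0.
Qed.

Lemma emb1_comm : comm (emb (fun _ => 1)).
Proof.
apply: comm_intro.
  split.
    by move=> k; rewrite /emb; case: ifP => _; apply: cst_continuous.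
  apply: (@sub_finite_set _ _ [set 0%Z]); last exact: finite_set1.
  by move=> k [y]; rewrite /emb; case: ifP => [/eqP -> //|]; rewrite eqxx.
move=> m y; rewrite /emb; case: ifP => [/eqP -> _|]; first by rewrite oppr0.
by rewrite eqxx.
Qed.

Section PartI.
Variable x : X.
Hypothesis hx : ~ (exists q : nat, (0 < q)%N /\ interior (Fix sigma q) x).

Lemma off0 (a : elt) m : comm a -> m != 0 -> a m x = 0.
Proof.
move=> ca m0; apply/eqP; apply: contraT => amx; exfalso; apply: hx.
by exists `|m|%N; split; [rewrite absz_gt0 | exact: comm_int ca amx].
Qed.

Lemma partI : is_hermitian_character sigma sigmai comm (@omega_x R X x) /\
  l1_continuous_on comm (@omega_x R X x).
Proof.
split; [split; [split|] |].
- by move=> a b _ _.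
- by [].
- move=> a b ca cb; rewrite /omega_x /emul (fsbigTE [fset 0%Z]%fset) ?big_seq_fset1.
    by rewrite subr0 oppr0.
  by move=> k; rewrite inE => k0; rewrite (off0 ca k0) mul0r.
- by exists (emb (fun=> 1)); [exact: emb1_comm | rewrite /omega_x /emb eqxx oner_eq0].
- by move=> a _; rewrite /omega_x /estar oppr0.
- move=> a ca e e0; exists e => // b cb hb; rewrite /omega_x.
  apply: le_lt_trans hb.
  have -> : b 0 x - a 0 x = esub b a 0 x by [].
  apply: le_trans (supnorm_ub (contB (cb.1.1 0) (ca.1.1 0)) x) _.
  have := le_l1 [fset 0%Z]%fset (esub_out ca.1 cb.1).
  by rewrite big_seq_fset1.
Qed.
End PartI.


Section PartII.
Variables (x : X) (n : nat) (c : C).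
Hypotheses (n0 : (0 < n)%N) (hxn : interior (Fix sigma n) x)
  (hmin : forall m : nat, (0 < m)%N -> (m < n)%N -> ~ interior (Fix sigma m) x)
  (c0 : c != 0).

Local Notation om := (omega_xc x n c).

Lemma nz0 : n%:Z != 0.
Proof. by rewrite eqz_nat -lt0n. Qed.

Lemma fixx : iter n sigma x = x.
Proof. exact: (@interior_subset _ _ x hxn). Qed.

Lemma iz (j : int) : iterz sigma sigmai (- (j * n%:Z)) x = x.
Proof. exact: iterz_mul_fix fixx. Qed.

Lemma div_off (a : elt) m : comm a -> a m x != 0 -> exists j : int, m = j * n%:Z.
Proof.
move=> ca amx; have h1 := comm_int ca amx.
have hg : interior (Fix sigma (gcdn n `|m|%N)) x.
  have : (Fix sigma n `&` Fix sigma `|m|%N)° x by rewrite interiorI; split.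
  by apply: interiorS => t [t1 t2]; apply: fix_gcd.
have g0 : (0 < gcdn n `|m|)%N by rewrite gcdn_gt0 n0.
have gn : (gcdn n `|m| <= n)%N by apply: dvdn_leq => //; apply: dvdn_gcdl.
have /eqP gE : gcdn n `|m|%N == n.
  rewrite eqn_leq gn /=; rewrite leqNgt; apply/negP => hlt.
  exact: (hmin g0 hlt hg).
have : (n %| `|m|)%N by rewrite -{1}gE dvdn_gcdr.
case: m {amx h1 hg g0 gn gE} => p /= /divnK h.
  by exists (p %/ n)%N%:Z; rewrite -PoszM h.
by exists (- (p.+1 %/ n)%N%:Z); rewrite NegzE mulNr -PoszM h.
Qed.

Definition Aset (a : elt) : {fset int} := [fset (k %/ n%:Z)%Z | k in supp a]%fset.

Lemma in_supp (a : elt) k : c00 a -> a k x != 0 -> k \in supp a.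
Proof.
move=> ca h; rewrite /supp in_fset_set; last exact: ca.2.
by apply/mem_set; exists x.
Qed.

Lemma A_out (a : elt) : c00 a -> forall j, j \notin Aset a -> a (j * n%:Z) x = 0.
Proof.
move=> ca j jA; apply/eqP; apply: contraNT jA => h; apply/imfsetP.
by exists (j * n%:Z); [exact: in_supp | rewrite mulzK // nz0].
Qed.

Lemma omega_W (a : elt) (W : {fset int}) :
  (forall j, j \notin W -> a (j * n%:Z) x = 0) ->
  om a = \sum_(j <- W) a (j * n%:Z) x * c ^ j.
Proof. by move=> h; rewrite /omega_xc (fsbigTE W) // => j /h ->; rewrite mul0r. Qed.

Lemma A_outU (a b : elt) : c00 a -> c00 b -> forall j,
  j \notin (Aset a `|` Aset b)%fset -> a (j * n%:Z) x = 0 /\ b (j * n%:Z) x = 0.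
Proof.
move=> ca cb j; rewrite in_fsetU negb_or => /andP[ja jb].
by rewrite (A_out ca ja) (A_out cb jb).
Qed.

Lemma om_add (a b : elt) : c00 a -> c00 b -> om (eadd a b) = om a + om b.
Proof.
move=> ca cb; set W := (Aset a `|` Aset b)%fset.
rewrite (@omega_W _ W); last by move=> j /(A_outU ca cb) [h1 h2]; rewrite /eadd h1 h2 addr0.
rewrite (@omega_W a W); last by move=> j /(A_outU ca cb) [].
rewrite (@omega_W b W); last by move=> j /(A_outU ca cb) [].
by rewrite -big_split /=; apply: eq_bigr => j _; rewrite /eadd mulrDl.
Qed.

Lemma om_scale l (a : elt) : c00 a -> om (escale l a) = l * om a.
Proof.
move=> ca; rewrite (@omega_W _ (Aset a)); last by move=> j /(A_out ca) h; rewrite /escale h mulr0.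
rewrite (@omega_W a (Aset a)); last exact: A_out ca.
rewrite mulr_sumr.
by apply: eq_bigr => j _; rewrite /escale mulrA.
Qed.

Lemma om_emb1 : om (emb (fun=> 1)) = 1.
Proof.
rewrite (@omega_W _ [fset 0%Z]%fset) ?big_seq_fset1.
  by rewrite mul0r /emb eqxx mul1r expr0z.
move=> j; rewrite inE => j0; rewrite /emb mulf_eq0 (negbTE j0) (negbTE nz0) //.
Qed.


Lemma inner (a b : elt) (j : int) : comm a -> comm b ->
  emul sigma sigmai a b (j * n%:Z) x =
  \sum_(i <- Aset a) a (i * n%:Z) x * b ((j - i) * n%:Z) x.
Proof.
move=> ca cb.
rewrite /emul (fsbigTE [fset i * n%:Z | i in Aset a]%fset).
  rewrite big_imfset /=; last by move=> i1 i2 _ _; apply: mulIf; exact: nz0.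
  by apply: eq_bigr => i _; rewrite iz mulrBl.
move=> k kA; have [->|akx] := eqVneq (a k x) 0; first by rewrite mul0r.
exfalso; move: kA; have [i ki] := div_off ca akx; subst k.
apply/negP; rewrite negbK; apply/imfsetP; exists i => //.
by apply: contraT => iA; rewrite (A_out ca.1 iA) eqxx in akx.
Qed.

Lemma om_mul (a b : elt) : comm a -> comm b -> om (emul sigma sigmai a b) = om a * om b.
Proof.
move=> ca cb; set A := Aset a; set B := Aset b.
set J := [fset (i + l)%R | i in A, l in B]%fset.
have bout : forall i j, i \in A -> j \notin J -> b ((j - i) * n%:Z) x = 0.
  move=> i j iA jJ; apply: (A_out cb.1); apply: contra jJ => jiB.
  by apply/imfset2P; exists i => //; exists (j - i) => //; rewrite addrC subrK.
rewrite (@omega_W _ J); last first.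
  move=> j jJ; rewrite inner //; apply: big1_seq => i /andP[_ iA].
  by rewrite (bout i j iA jJ) mulr0.
rewrite (@omega_W a A); last exact: A_out ca.1.
rewrite (@omega_W b B); last exact: A_out cb.1.
under eq_bigr => j _ do rewrite inner // mulr_suml.
rewrite exchange_big /= mulr_suml.
apply: eq_big_seq => i iA.
rewrite -(fsbigTE J (fun j => a (i * n%:Z) x * b ((j - i) * n%:Z) x * c ^ j)); last first.
  by move=> j jJ; rewrite (bout i j iA jJ) mulr0 mul0r.
rewrite (reindex_fsbigT (fun l => l + i)); last first.
  by exists (fun l => l - i) => l; rewrite ?addrK ?subrK.
rewrite (fsbigTE B); last first.
  by move=> l lB; rewrite addrK (A_out cb.1 lB) mulr0 mul0r.
rewrite mulr_sumr; apply: eq_bigr => l _.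
rewrite addrK exprzDr ?unitfE //.
by rewrite [c ^ l * c ^ i]mulrC mulrACA.
Qed.


Lemma cabsX (z : C) k : cabs (z ^+ k) = cabs z ^+ k.
Proof. by elim: k => [|k IH]; rewrite ?expr0 ?cabs1 // !exprS cabsM IH. Qed.

Lemma cabsV (z : C) : z != 0 -> cabs (z^-1) = (cabs z)^-1.
Proof.
move=> z0; have cz : cabs z != 0 by rewrite cabs_eq0.
have h : cabs z * cabs z^-1 = 1 by rewrite -cabsM mulfV // cabs1.
by rewrite -[cabs z^-1]mul1r -(mulVf cz) -mulrA h mulr1.
Qed.

Lemma cabsXz (z : C) (j : int) : z != 0 -> cabs (z ^ j) = cabs z ^ j.
Proof.
move=> z0; case: j => k; first exact: cabsX.
by rewrite /= cabsV ?expf_neq0 // cabsX.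
Qed.

Lemma conj_c : `|c| = 1 -> c^* = c^-1.
Proof.
move=> hc; have h : c * c^* = 1 by rewrite -normCK hc expr1n.
by rewrite -[c^*]mul1r -(mulVf c0) -mulrA h mulr1.
Qed.

Lemma om_herm : `|c| = 1 -> forall a : elt, comm a -> om (estar sigma sigmai a) = (om a)^*.
Proof.
move=> hc a ca.
rewrite /omega_xc (reindex_fsbigT (fun j : int => - j)); last first.
  by exists -%R => j; rewrite opprK.
rewrite (fsbigTE (Aset a)); last first.
  move=> j jA; rewrite /estar iz mulNr opprK (A_out ca.1 jA) conjC0 mul0r //.
rewrite -/(omega_xc x n c a) (@omega_W a (Aset a)); last exact: A_out ca.1.
rewrite rmorph_sum; apply: eq_bigr => j _.
rewrite /estar iz mulNr opprK rmorphM /=; congr (_ * _).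
by rewrite rmorphXz ?unitfE // -exprz_inv -(conj_c hc).
Qed.

Lemma cabs_c : `|c| = 1 -> cabs c = 1.
Proof. by move=> hc; rewrite /cabs hc. Qed.

Lemma om_cont : `|c| = 1 -> l1_continuous_on comm om.
Proof.
move=> hc a ca e e0; exists e => // b cb hb.
apply: le_lt_trans hb.
set W := (Aset a `|` Aset b)%fset.
rewrite (@omega_W b W); last by move=> j /(A_outU ca.1 cb.1) [].
rewrite (@omega_W a W); last by move=> j /(A_outU ca.1 cb.1) [].
rewrite -sumrB.
apply: le_trans (cabs_sum _ _) _.
have -> : \sum_(j <- W) cabs (b (j * n%:Z) x * c ^ j - a (j * n%:Z) x * c ^ j) =
          \sum_(j <- W) cabs (esub b a (j * n%:Z) x).
  apply: eq_bigr => j _; rewrite -mulrBl cabsM cabsXz // cabs_c // exp1rz mulr1 //.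
apply: le_trans (_ : \sum_(j <- W) supnorm (esub b a (j * n%:Z)) <= _).
  apply: ler_sum => j _.
  exact: (supnorm_ub (contB (cb.1.1 _) (ca.1.1 _)) x).
have -> : \sum_(j <- W) supnorm (esub b a (j * n%:Z)) =
    \sum_(k <- [fset j * n%:Z | j in W]%fset) supnorm (esub b a k).
  rewrite [RHS]big_imfset //; move=> i1 i2 _ _; apply: mulIf; exact: nz0.
exact: (le_l1 _ (esub_out ca.1 cb.1)).
Qed.


Lemma bump : exists g : X -> C, [/\ continuous g, forall t, cabs (g t) <= 1,
  forall t, ~ interior (Fix sigma n) t -> g t = 0 & g x = 1].
Proof.
have cA : closed (~` (Fix sigma n)°) by apply: open_closedC; exact: open_interior.
have dis : (~` (Fix sigma n)°) `&` [set x] = set0.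
  by apply/seteqP; split => t //= [nt tx]; apply: nt; rewrite tx.
have [g [cg g1 g0 gx]] := urysohnC cA (@cl1 x) dis.
by exists g; split => //; apply: gx.
Qed.

Definition delta (m : int) (h : X -> C) : elt :=
  fun k => if k == m then h else fun _ => 0.

Lemma delta_comm (j : int) (h : X -> C) : continuous h ->
  (forall t, ~ interior (Fix sigma n) t -> h t = 0) -> comm (delta (j * n%:Z) h).
Proof.
move=> ch h0; apply: comm_intro.
  split.
    by move=> k; rewrite /delta; case: ifP => _; [exact: ch | exact: cst_continuous].
  apply: (@sub_finite_set _ _ [set j * n%:Z]); last exact: finite_set1.
  by move=> k [y]; rewrite /delta; case: ifP => [/eqP -> //|]; rewrite eqxx.
move=> k y; rewrite /delta; case: ifP => [/eqP -> hy|]; last by rewrite eqxx.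
apply: iterz_mul_fix.
have [I|nI] := pselect (interior (Fix sigma n) y).
  exact: (@interior_subset _ _ y I).
by rewrite h0 // eqxx in hy.
Qed.

Lemma om_delta (j : int) (h : X -> C) : om (delta (j * n%:Z) h) = h x * c ^ j.
Proof.
rewrite (@omega_W _ [fset j]%fset) ?big_seq_fset1.
  by rewrite /delta eqxx.
move=> i; rewrite inE => ij; rewrite /delta.
case: eqP => // /mulIf h1; by rewrite h1 ?eqxx ?nz0 in ij.
Qed.

Lemma herm_nec : is_hermitian_character sigma sigmai comm om -> `|c| = 1.
Proof.
move=> [_ H]; have [g [cg g1 g0 gx]] := bump.
have := H _ (delta_comm 1 cg g0); rewrite om_delta gx mul1r expr1z.
rewrite (@omega_W _ [fset (-1)%Z]%fset) ?big_seq_fset1.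
  rewrite /estar iz mulN1r opprK /delta mul1r eqxx gx conjC1 mul1r.
  move=> hc0; have hc : c^-1 = c^* by exact: hc0.
  have : `|c| ^+ 2 = 1 by rewrite normCK -hc mulfV.
  by move/eqP; rewrite sqrp_eq1 // => /eqP.
move=> i; rewrite inE => i1.
rewrite /estar iz /delta -mulNr.
case: eqP => [h1|_]; last by rewrite conjC0.
exfalso; move: i1; have h2 : - i = 1 by apply: (mulIf nz0); rewrite h1 ?mul1r.
by rewrite -(opprK i) h2 eqxx.
Qed.

Lemma zero_comm : comm (fun _ _ => 0).
Proof.
apply: comm_intro; last by move=> m y; rewrite eqxx.
split; first by move=> k; exact: cst_continuous.
by apply: (@sub_finite_set _ _ set0); [move=> k [y]; rewrite eqxx | exact: finite_set0].
Qed.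


Lemma cont_nec : l1_continuous_on comm om -> `|c| = 1.
Proof.
move=> H; have [d d0 Hd] := H _ zero_comm 1 ltr01.
have om0 : om (fun _ _ => 0) = 0 by rewrite /omega_xc fsbig1 // => j _; rewrite mul0r.
have [g [cg g1 g0 gx]] := bump.
set eps := d / 2.
have eps0 : 0 < eps by rewrite /eps divr_gt0.
have key : forall j : int, eps * cabs c ^ j < 1.
  move=> j; pose h : X -> C := fun t => (eps%:C)%C * g t.
  have ch : continuous h.
    by move=> t; rewrite /h; apply: cvgMr; exact: cg.
  have h0 : forall t, ~ interior (Fix sigma n) t -> h t = 0.
    by move=> t nt; rewrite /h g0 // mulr0.
  have cb := delta_comm j ch h0.
  have := Hd _ cb.
  rewrite om_delta om0 subr0 /h gx mulr1 cabsM cabs_real ?(ltW eps0) // cabsXz //.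
  apply.
  rewrite (@l1norm_W _ [fset j * n%:Z]%fset) ?big_seq_fset1.
    apply: (@le_lt_trans _ _ eps); last by rewrite /eps ltr_pdivrMr // ltr_pMr // ltr1n.
    apply: supnorm_le => t; rewrite /esub /delta eqxx subr0 cabsM cabs_real ?(ltW eps0) //.
    exact: ler_piMr (ltW eps0) (g1 t).
  move=> k; rewrite inE => kj t; rewrite /esub /delta (negbTE kj) subr0 //.
have cpos : 0 < cabs c by rewrite lt0r cabs_eq0 c0 cabs_ge0.
rewrite normr_cabs.
case: (ltgtP (cabs c) 1) => hc; last by rewrite hc.
- have s1 : 1 < (cabs c)^-1 by rewrite invf_gt1.
  have [k hk] := pow_unb (eps^-1) s1.
  have := key (- k%:Z); rewrite -exprz_inv /= => hk2.
  have : eps * eps^-1 < eps * (cabs c)^-1 ^+ k by rewrite ltr_pM2l.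
  rewrite mulfV ?gt_eqF // => h1.
  by have := lt_trans h1 hk2; rewrite ltxx.
- have [k hk] := pow_unb (eps^-1) hc.
  have := key k%:Z; rewrite /= => hk2.
  have : eps * eps^-1 < eps * cabs c ^+ k by rewrite ltr_pM2l.
  rewrite mulfV ?gt_eqF // => h1.
  by have := lt_trans h1 hk2; rewrite ltxx.
Qed.



Lemma herm_of : `|c| = 1 -> is_hermitian_character sigma sigmai comm om.
Proof.
move=> hc; split; last exact: om_herm.
split.
- by move=> a b ca cb; exact: om_add ca.1 cb.1.
- by move=> l a ca; apply: om_scale; exact: ca.1.
- by move=> a b ca cb; exact: om_mul.
- by exists (emb (fun=> 1)); [exact: emb1_comm | rewrite om_emb1 oner_eq0].
Qed.

Lemma partII : (l1_continuous_on comm om <-> is_hermitian_character sigma sigmai comm om) /\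
  (is_hermitian_character sigma sigmai comm om <-> `|c| = 1).
Proof.
split; split.
- by move/cont_nec; exact: herm_of.
- by move/herm_nec; exact: om_cont.
- exact: herm_nec.
- exact: herm_of.
Qed.

End PartII.


Lemma main_sec :
  (forall x : X,
     ~ (exists q : nat, (0 < q)%N /\ interior (Fix sigma q) x) ->
     is_hermitian_character sigma sigmai (@commutant00 R X sigma sigmai) (@omega_x R X x) /\
     l1_continuous_on (@commutant00 R X sigma sigmai) (@omega_x R X x)) /\
  (forall (x : X) (n : nat) (c : CC R),
     (0 < n)%N -> interior (Fix sigma n) x ->
     (forall m : nat, (0 < m)%N -> (m < n)%N -> ~ interior (Fix sigma m) x) ->
     c != 0 ->
     (l1_continuous_on (@commutant00 R X sigma sigmai) (omega_xc x n c) <->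
      is_hermitian_character sigma sigmai (@commutant00 R X sigma sigmai) (omega_xc x n c)) /\
     (is_hermitian_character sigma sigmai (@commutant00 R X sigma sigmai) (omega_xc x n c) <->
      `|c| = 1)).
Proof.
split; first by move=> x hx; apply: partI.
by move=> x n c n0 hxn hmin c0; apply: partII.
Qed.

End Main.

Unset Implicit Arguments.
Set Strict Implicit.

Theorem lemma3p7 (R : realType) (X : topologicalType) (sigma sigmai : X -> X) :
  hausdorff_space X -> compact [set: X] -> [set: X] !=set0 ->
  continuous sigma -> continuous sigmai ->
  cancel sigma sigmai -> cancel sigmai sigma ->
  (forall x : X,
     ~ (exists q : nat, (0 < q)%N /\ interior (Fix sigma q) x) ->
     is_hermitian_character sigma sigmai (@commutant00 R X sigma sigmai) (@omega_x R X x) /\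
     l1_continuous_on (@commutant00 R X sigma sigmai) (@omega_x R X x)) /\
  (forall (x : X) (n : nat) (c : CC R),
     (0 < n)%N -> interior (Fix sigma n) x ->
     (forall m : nat, (0 < m)%N -> (m < n)%N -> ~ interior (Fix sigma m) x) ->
     c != 0 ->
     (l1_continuous_on (@commutant00 R X sigma sigmai) (omega_xc x n c) <->
      is_hermitian_character sigma sigmai (@commutant00 R X sigma sigmai) (omega_xc x n c)) /\
     (is_hermitian_character sigma sigmai (@commutant00 R X sigma sigmai) (omega_xc x n c) <->
      `|c| = 1)).
Proof.
by move=> hX cX nX _ _ sK siK; apply: main_sec.
Qed.
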